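(* Under the setting below, assume $G$ is convex and the sampling in Algorithm BC is essentially cyclic: there exists $T\ge1$ such that every index $i\in[N]$ belongs to at least one of the sets $I^{k+1},\dots,I^{k+T}$ for every $k\ge0$. Then (surely): (i) $\sum_k\|\bm x^k-\bm z^k\|^2<\infty$; (ii) $\Phi(\bm z^k)\to\Phi_\star:=\lim_k\Phi^{\mathrm{FB}}_\Gamma(\bm x^k)$ (finite, $\ge\min\Phi$); (iii) $(\bm x^k)$ and $(\bm z^k)$ have the same cluster points, each such cluster point $\bm x^\star$ satisfies $0\in\hat\partial\Phi(\bm x^\star)$ and $\Phi(\bm x^\star)=\Phi^{\mathrm{FB}}_\Gamma(\bm x^\star)=\Phi_\star$.
   Context: Setting: $N\ge1$, $n=\sum_{i=1}^N n_i$, $\bm x=(x_1,\dots,x_N)$ with $x_i\in\mathbb R^{n_i}$; $\Phi=F+G$ with $F(\bm x)=\frac1N\sum_i f_i(x_i)$, each $f_i:\mathbb R^{n_i}\to\mathbb R$ differentiable with $L_{f_i}$-Lipschitz gradient, $G:\mathbb R^n\to\mathbb R\cup\{+\infty\}$ proper lsc, $\arg\min\Phi\ne\emptyset$. $\gamma_i\in(0,N/L_{f_i})$, $\Gamma=\operatorname{blockdiag}(\gamma_1I_{n_1},\dots,\gamma_NI_{n_N})$, $\|x\|_V^2=\langle x,Vx\rangle$, $\operatorname{prox}_G^{V}(u)=\arg\min_w\{G(w)+\frac12\|w-u\|_V^2\}$, $\mathbf T(\bm x)=\operatorname{prox}_G^{\Gamma^{-1}}(\bm x-\Gamma\nabla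 F(\bm x))$. Forward-backward envelope: $\Phi^{\mathrm{FB}}_\Gamma(\bm x):=\inf_{\bm w}\{F(\bm x)+\langle\nabla F(\bm x),\bm w-\bm x\rangle+G(\bm w)+\frac12\|\bm w-\bm x\|^2_{\Gamma^{-1}}\}$. Algorithm BC: given $\bm x^0\in\mathbb R^n$, for $k=0,1,\dots$: pick $\bm z^k\in\mathbf T(\bm x^k)$; select $I^{k+1}\subseteq[N]$; set $x_i^{k+1}=z_i^k$ for $i\in I^{k+1}$ and $x_i^{k+1}=x_i^k$ otherwise. $\hat\partial$ denotes the regular (Fréchet) subdifferential. *)

(* Defs.v *)
From Stdlib Require Import Reals.
From mathcomp Require Import all_boot.
Set Implicit Arguments.
Unset Strict Implicit.
Unset Printing Implicit Defensive.

Local Open Scope R_scope.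

Inductive ereal := EFin (r : R) | EPInf.

Definition ele (a b : ereal) : Prop :=
  match a, b with
  | _, EPInf => True
  | EPInf, EFin _ => False
  | EFin x, EFin y => x <= y
  end.

Definition rlt_e (r : R) (a : ereal) : Prop :=
  match a with EFin y => r < y | EPInf => True end.

Definition eplus (r : R) (a : ereal) : ereal :=
  match a with EFin y => EFin (r + y) | EPInf => EPInf end.

Definition vec (m : nat) := 'I_m -> R.
Definition fsum (m : nat) (F : 'I_m -> R) : R := \big[Rplus/0]_(j < m) F j.
Definition dotv (m : nat) (u v : vec m) : R := fsum (fun j => u j * v j).
Definition normv (m : nat) (u : vec m) : R := sqrt (dotv u u).
Definition addv (m : nat) (u v : vec m) : vec m := fun j => u j + v j.
Definition subv (m : nat) (u v : vec m) : vec m := fun j => u j - v j.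

Definition has_gradient (m : nat) (f : vec m -> R) (g : vec m -> vec m) : Prop :=
  forall x eps, 0 < eps -> exists delta, 0 < delta /\
    forall h : vec m, normv h < delta ->
      Rabs (f (addv x h) - f x - dotv (g x) h) <= eps * normv h.

Definition lipschitz (m : nat) (g : vec m -> vec m) (L : R) : Prop :=
  forall x y, normv (subv (g x) (g y)) <= L * normv (subv x y).

Definition bvec (N : nat) (n : 'I_N -> nat) := forall i : 'I_N, vec (n i).
Definition bdot N (n : 'I_N -> nat) (u v : bvec n) : R :=
  fsum (fun i => dotv (u i) (v i)).
Definition bsqnorm N (n : 'I_N -> nat) (u : bvec n) : R := bdot u u.
Definition bnorm N (n : 'I_N -> nat) (u : bvec n) : R := sqrt (bsqnorm u).
Definition bsub N (n : 'I_N -> nat) (u v : bvec n) : bvec n :=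
  fun i j => u i j - v i j.
Definition bcomb N (n : 'I_N -> nat) (t : R) (u v : bvec n) : bvec n :=
  fun i j => t * u i j + (1 - t) * v i j.
Definition bzero N (n : 'I_N -> nat) : bvec n := fun i j => 0.
(* ||u||^2_{Gamma^{-1}} with Gamma = blockdiag(gam_i I_{n_i}) *)
Definition bwsqnorm N (n : 'I_N -> nat) (gam : 'I_N -> R) (u : bvec n) : R :=
  fsum (fun i => / gam i * dotv (u i) (u i)).

Definition proper_fun N (n : 'I_N -> nat) (G : bvec n -> ereal) : Prop :=
  exists x r, G x = EFin r.
Definition lsc N (n : 'I_N -> nat) (G : bvec n -> ereal) : Prop :=
  forall x r, rlt_e r (G x) -> exists delta, 0 < delta /\
    forall y, bnorm (bsub y x) < delta -> rlt_e r (G y).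
Definition convex_fun N (n : 'I_N -> nat) (G : bvec n -> ereal) : Prop :=
  forall x y a b t, G x = EFin a -> G y = EFin b -> 0 <= t <= 1 ->
    ele (G (bcomb t x y)) (EFin (t * a + (1 - t) * b)).

Definition Fsum N (n : 'I_N -> nat) (f : forall i : 'I_N, vec (n i) -> R)
  (x : bvec n) : R := / INR N * fsum (fun i => f i (x i)).
Definition gradF N (n : 'I_N -> nat) (gf : forall i : 'I_N, vec (n i) -> vec (n i))
  (x : bvec n) : bvec n := fun i j => / INR N * gf i (x i) j.
Definition PhiF N (n : 'I_N -> nat) (f : forall i : 'I_N, vec (n i) -> R)
  (G : bvec n -> ereal) (x : bvec n) : ereal := eplus (Fsum f x) (G x).

Definition is_minimizer N (n : 'I_N -> nat) (H : bvec n -> ereal) (w : bvec n) : Prop :=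
  exists a, H w = EFin a /\ forall y, ele (EFin a) (H y).

(* w ∈ prox_G^{Gamma^{-1}}(u) = argmin_w { G(w) + 1/2 ||w - u||^2_{Gamma^{-1}} } *)
Definition in_prox N (n : 'I_N -> nat) (G : bvec n -> ereal) (gam : 'I_N -> R)
  (u w : bvec n) : Prop :=
  exists a, G w = EFin a /\
    forall w', ele (EFin (a + / 2 * bwsqnorm gam (bsub w u)))
                   (eplus (/ 2 * bwsqnorm gam (bsub w' u)) (G w')).

Definition fb_point N (n : 'I_N -> nat) (gf : forall i : 'I_N, vec (n i) -> vec (n i))
  (gam : 'I_N -> R) (x : bvec n) : bvec n :=
  fun i j => x i j - gam i * (gradF (n:=n) gf x) i j.

Definition in_T N (n : 'I_N -> nat) (gf : forall i : 'I_N, vec (n i) -> vec (n i))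
  (G : bvec n -> ereal) (gam : 'I_N -> R) (x z : bvec n) : Prop :=
  in_prox G gam (fb_point gf gam x) z.

Definition is_inf (E : R -> Prop) (m : R) : Prop :=
  (forall y, E y -> m <= y) /\
  (forall m', (forall y, E y -> m' <= y) -> m' <= m).

(* the values whose infimum is the forward-backward envelope at x
   (terms with G(w) = +oo do not affect the infimum) *)
Definition FBE_set N (n : 'I_N -> nat) (f : forall i : 'I_N, vec (n i) -> R)
  (gf : forall i : 'I_N, vec (n i) -> vec (n i)) (G : bvec n -> ereal)
  (gam : 'I_N -> R) (x : bvec n) (r : R) : Prop :=
  exists w g, G w = EFin g /\
    r = Fsum f x + bdot (gradF gf x) (bsub w x) + g + / 2 * bwsqnorm gam (bsub w x).

Definition is_FBE N (n : 'I_N -> nat) (f : forall i : 'I_N, vec (n i) -> R)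
  (gf : forall i : 'I_N, vec (n i) -> vec (n i)) (G : bvec n -> ereal)
  (gam : 'I_N -> R) (x : bvec n) (v : R) : Prop :=
  is_inf (FBE_set f gf G gam x) v.

(* v ∈ regular (Fréchet) subdifferential of H at x:
   H(x) finite and liminf_{y -> x, y <> x} (H y - H x - <v, y - x>)/||y - x|| >= 0 *)
Definition in_frechet_subdiff N (n : 'I_N -> nat) (H : bvec n -> ereal)
  (x v : bvec n) : Prop :=
  exists a, H x = EFin a /\
    forall eps, 0 < eps -> exists delta, 0 < delta /\
      forall y, bnorm (bsub y x) < delta ->
        ele (EFin (a + bdot v (bsub y x) - eps * bnorm (bsub y x))) (H y).

Definition cluster_point N (n : 'I_N -> nat) (s : nat -> bvec n) (c : bvec n) : Prop :=
  forall eps, 0 < eps -> forall M : nat, exists k : nat, (M <= k)%nat /\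
    bnorm (bsub (s k) c) < eps.

(* Main.v *)
Require Import Defs.
From Stdlib Require Import Reals Lra Psatz FunctionalExtensionality.
From mathcomp Require Import all_boot.
From HB Require Import structures.
Local Open Scope R_scope.

Lemma Rplus_assoc' : associative Rplus. Proof. by move=> a b c; rewrite Rplus_assoc. Qed.
HB.instance Definition _ := Monoid.isComLaw.Build R R0 Rplus Rplus_assoc' Rplus_comm Rplus_0_l.

Lemma fsum_ext {m} (F G : 'I_m -> R) : (forall j, F j = G j) -> fsum F = fsum G.
Proof. move=> H; rewrite /fsum; apply: eq_bigr => j _; exact: H. Qed.

Lemma fsum_plus {m} (F G : 'I_m -> R) : fsum (fun j => F j + G j) = fsum F + fsum G.
Proof. by rewrite /fsum big_split. Qed.

Lemma fsum_scal {m} c (F : 'I_m -> R) : fsum (fun j => c * F j) = c * fsum F.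
Proof. rewrite /fsum; elim/big_rec2: _ => [|i y1 y2 _ ->]; ring. Qed.

Lemma fsum_le {m} (F G : 'I_m -> R) : (forall j, F j <= G j) -> fsum F <= fsum G.
Proof.
move=> H; rewrite /fsum; elim/big_rec2: _ => [|i y1 y2 _ Hy]; first lra.
have := H i; lra.
Qed.

Lemma fsum_nonneg {m} (F : 'I_m -> R) : (forall j, 0 <= F j) -> 0 <= fsum F.
Proof.
move=> H; rewrite /fsum; elim/big_rec: _ => [|i y _ Hy]; first lra.
have := H i; lra.
Qed.

Lemma fsum_ge_term {m} (F : 'I_m -> R) i : (forall j, 0 <= F j) -> F i <= fsum F.
Proof.
move=> H; rewrite /fsum (bigD1 i) //=.
rewrite -{1}(Rplus_0_r (F i)); apply: Rplus_le_compat_l.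
elim/big_rec: _ => [|k y _ Hy]; first lra. have := H k; lra.
Qed.

Lemma fsum_zero {m} : fsum (fun _ : 'I_m => 0) = 0.
Proof. by rewrite /fsum big1. Qed.

Lemma fsum_lin {m} a b (F G : 'I_m -> R) :
  a * fsum F + b * fsum G = fsum (fun j => a * F j + b * G j).
Proof. by rewrite fsum_plus -!fsum_scal. Qed.

Lemma fsum_minus {m} (F G : 'I_m -> R) : fsum F - fsum G = fsum (fun j => F j - G j).
Proof.
have -> : fsum F - fsum G = 1 * fsum F + (-1) * fsum G by ring.
rewrite fsum_lin; apply: fsum_ext => j; ring.
Qed.

Lemma abs_between x b : Rabs x <= b -> - b <= x <= b.
Proof.
move=> H; have := Rle_abs x; have := Rle_abs (- x); rewrite Rabs_Ropp; lra.
Qed.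

Lemma fsum_opp {m} (F : 'I_m -> R) : fsum (fun j => - F j) = - fsum F.
Proof.
have -> : - fsum F = (-1) * fsum F by ring.
rewrite -fsum_scal; apply: fsum_ext => j; ring.
Qed.

Lemma fsum_zero_each {m} (F : 'I_m -> R) : (forall j, 0 <= F j) -> fsum F <= 0 -> forall j, F j = 0.
Proof. move=> H H0 j; have := fsum_ge_term F j H; have := H j; lra. Qed.

Lemma fsum_bound {m} (F : 'I_m -> R) C : (forall j, 0 <= F j) -> (forall j, F j <= C) ->
  fsum F <= INR m * C.
Proof.
move=> H0 H; rewrite /fsum; elim: m F H0 H => [|m IH] F H0 H.
  by rewrite big_ord0 /=; lra.
rewrite S_INR big_ord_recr /=.
apply: (Rle_trans _ (INR m * C + C)); last lra.
apply: Rplus_le_compat; last exact: H.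
exact: (IH (fun i => F (widen_ord (leqnSn m) i)) (fun j => H0 _) (fun j => H _)).
Qed.

Lemma young2 e a b : 0 < e -> 2 * (a * b) <= e * (a * a) + / e * (b * b).
Proof.
move=> He.
have H1 : e * (e * (a * a) + / e * (b * b) - 2 * (a * b)) = (e * a - b) * (e * a - b) by field; apply: Rgt_not_eq.
have H2 : 0 <= (e * a - b) * (e * a - b) by exact: Rle_0_sqr.
have : 0 <= e * (a * a) + / e * (b * b) - 2 * (a * b).
  apply: (Rmult_le_reg_l e) => //; lra.
lra.
Qed.

Lemma dotv_nonneg {m} (u : vec m) : 0 <= dotv u u.
Proof. apply: fsum_nonneg => j; nra. Qed.

Lemma dotv_young {m} e (u v : vec m) : 0 < e -> 2 * dotv u v <= e * dotv u u + / e * dotv v v.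
Proof.
move=> He; rewrite /dotv -fsum_scal fsum_lin; apply: fsum_le => j; exact: young2.
Qed.

Lemma normv_sq {m} (u : vec m) : normv u * normv u = dotv u u.
Proof. rewrite /normv sqrt_sqrt //; exact: dotv_nonneg. Qed.

Lemma normv_nonneg {m} (u : vec m) : 0 <= normv u.
Proof. exact: sqrt_pos. Qed.

Lemma lip_sq {m} (g : vec m -> vec m) L x y : 0 <= L -> lipschitz g L ->
  dotv (subv (g x) (g y)) (subv (g x) (g y)) <= L * L * dotv (subv x y) (subv x y).
Proof.
move=> HL Hl; rewrite -!normv_sq; have := Hl x y.
have := normv_nonneg (subv (g x) (g y)); have := normv_nonneg (subv x y); nra.
Qed.

Lemma dotv_scal_r {m} c (u v : vec m) : dotv u (fun j => c * v j) = c * dotv u v.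
Proof. rewrite /dotv -fsum_scal; apply: fsum_ext => j; ring. Qed.

Lemma normv_scal {m} s (h : vec m) : normv (fun j => s * h j) = Rabs s * normv h.
Proof.
rewrite /normv.
have -> : dotv (fun j => s * h j) (fun j => s * h j) = (s * s) * dotv h h.
  rewrite /dotv -fsum_scal; apply: fsum_ext => j; ring.
rewrite sqrt_mult_alt; last nra.
by rewrite -Rsqr_def sqrt_Rsqr_abs.
Qed.

Lemma dotv_sub_l {m} (a b h : vec m) : dotv (subv a b) h = dotv a h - dotv b h.
Proof. rewrite /dotv fsum_minus; apply: fsum_ext => j; rewrite /subv; ring. Qed.

Lemma dotv_zero_l {m} (a h : vec m) : dotv a a <= 0 -> dotv a h = 0.
Proof.
move=> H.
have Hz := @fsum_zero_each _ (fun j => a j * a j) (fun j => Rle_0_sqr (a j)) H.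
rewrite /dotv -(@fsum_zero m); apply: fsum_ext => j.
have := Hz j => /= Hj.
have -> : a j = 0 by apply: Rsqr_0_uniq; exact: Hj.
ring.
Qed.

Lemma inner_lip {m} (a h : vec m) L c : 0 <= L -> 0 < c ->
  dotv a a <= L * L * (c * c) * dotv h h -> dotv a h <= L * c * dotv h h.
Proof.
move=> HL Hc H.
have HQ := dotv_nonneg h.
case: (Req_dec L 0) => [HL0|HL0].
  rewrite dotv_zero_l; last by rewrite HL0 in H; lra.
  rewrite HL0; lra.
have HP : 0 < L * c by apply: Rmult_lt_0_compat => //; lra.
have Hy := dotv_young (/ (L * c)) a h (Rinv_0_lt_compat _ HP).
rewrite Rinv_inv in Hy.
have H2 : / (L * c) * dotv a a <= / (L * c) * (L * L * (c * c) * dotv h h).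
  apply: Rmult_le_compat_l => //; left; exact: Rinv_0_lt_compat.
have E : / (L * c) * (L * L * (c * c) * dotv h h) = L * c * dotv h h.
  field; split; apply: Rgt_not_eq; lra.
rewrite E in H2.
lra.
Qed.

Lemma phi_deriv {m} (f : vec m -> R) g (x h : vec m) t : has_gradient f g ->
  derivable_pt_lim (fun t => f (fun j => x j + t * h j)) t
     (dotv (g (fun j => x j + t * h j)) h).
Proof.
move=> Hg eps Heps.
have Hnh := normv_nonneg h.
set nh := normv h in Hnh *.
set pt : vec m := fun j => x j + t * h j.
have Heps' : 0 < eps / (2 * (nh + 1)) by apply: Rdiv_lt_0_compat; lra.
have [delta [Hdel Hd]] := Hg pt _ Heps'.
have Hdp : 0 < delta / (nh + 1) by apply: Rdiv_lt_0_compat; lra.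
exists (mkposreal _ Hdp) => s Hs0 Hs /=.
simpl in Hs.
set h' : vec m := fun j => s * h j.
have Hnh' : normv h' = Rabs s * nh by rewrite /h' normv_scal.
have Has : 0 < Rabs s by apply: Rabs_pos_lt.
have Hsd : Rabs s * (nh + 1) < delta.
  have := Rmult_lt_compat_r (nh + 1) _ _ ltac:(lra) Hs.
  have -> : delta / (nh + 1) * (nh + 1) = delta by field; apply: Rgt_not_eq; lra.
  done.
have Hlt : normv h' < delta by rewrite Hnh'; nra.
have := Hd h' Hlt.
have -> : addv pt h' = (fun j => x j + (t + s) * h j).
  apply: functional_extensionality => j; rewrite /addv /pt /h'; ring.
rewrite /h' dotv_scal_r Hnh'.
set A := f (fun j => x j + (t + s) * h j) - f pt.
set Dg := dotv (g pt) h.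
move=> HA.
have -> : A / s - Dg = (A - s * Dg) * / s by field.
rewrite Rabs_mult Rabs_inv.
have HA' : Rabs (A - s * Dg) <= eps / (2 * (nh + 1)) * (Rabs s * nh).
  have -> : A - s * Dg = f (fun j => x j + (t + s) * h j) - f pt - s * Dg by rewrite /A; ring.
  exact: HA.
have H1 : Rabs (A - s * Dg) * / Rabs s <= eps / (2 * (nh + 1)) * nh.
  have Hi : 0 < / Rabs s by apply: Rinv_0_lt_compat.
  have := Rmult_le_compat_r (/ Rabs s) _ _ (Rlt_le _ _ Hi) HA'.
  have -> : eps / (2 * (nh + 1)) * (Rabs s * nh) * / Rabs s = eps / (2 * (nh + 1)) * nh.
    field; split; apply: Rgt_not_eq; lra.
  done.
have H2 : eps / (2 * (nh + 1)) * nh < eps.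
  have -> : eps / (2 * (nh + 1)) * nh = eps * (nh / (2 * (nh + 1))) by field; apply: Rgt_not_eq; lra.
  have : nh / (2 * (nh + 1)) < 1.
    apply: (Rmult_lt_reg_r (2 * (nh + 1))); first lra.
    have -> : nh / (2 * (nh + 1)) * (2 * (nh + 1)) = nh by field; apply: Rgt_not_eq; lra.
    lra.
  move=> Hq; nra.
lra.
Qed.

Lemma ring_aux1 a D0 L t Q : a - D0 - L * t * Q =
  a - (0 * t + D0 * 1 + (0 * (t * t) + L / 2 * Q * (1 * t + t * 1))).
Proof. field. Qed.

Lemma descent {m} (f : vec m -> R) g L : has_gradient f g -> 0 <= L -> lipschitz g L ->
  forall x y, f y <= f x + dotv (g x) (subv y x) + L / 2 * dotv (subv y x) (subv y x).
Proof.
move=> Hg HL Hl x y.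
set h := subv y x.
have HQ := dotv_nonneg h.
remember (dotv h h) as Q eqn:EQ.
remember (dotv (g x) h) as D0 eqn:ED.
pose p t : vec m := fun j => x j + t * h j.
pose phi t := f (p t).
pose q := (fct_cte D0 * Ranalysis1.id + fct_cte (L / 2 * Q) * (Ranalysis1.id * Ranalysis1.id))%F.
pose psi := (phi - q)%F.
pose psi' t := dotv (g (p t)) h - D0 - L * t * Q.
have Hd : forall t, derivable_pt_lim psi t (psi' t).
  move=> t.
  have E : psi' t = dotv (g (p t)) h -
     ((0 * Ranalysis1.id t + fct_cte D0 t * 1) + (0 * (Ranalysis1.id * Ranalysis1.id)%F t + fct_cte (L / 2 * Q) t * (1 * Ranalysis1.id t + Ranalysis1.id t * 1))).
    rewrite /psi'; cbv [fct_cte mult_fct Ranalysis1.id]; exact: ring_aux1.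
  rewrite E; apply: derivable_pt_lim_minus; first exact: phi_deriv.
  apply: derivable_pt_lim_plus; apply: derivable_pt_lim_mult.
  - exact: derivable_pt_lim_const.
  - exact: derivable_pt_lim_id.
  - exact: derivable_pt_lim_const.
  - apply: derivable_pt_lim_mult; exact: derivable_pt_lim_id.
have [c [Hc1 Hc2]] := MVT_cor2 psi psi' 0 1 Rlt_0_1 (fun c _ => Hd c).
have Hp1 : p 1 = y by apply: functional_extensionality => j; rewrite /p /h /subv; ring.
have Hp0 : p 0 = x by apply: functional_extensionality => j; rewrite /p; ring.
have Hneg : psi' c <= 0.
  rewrite /psi'.
  have -> : dotv (g (p c)) h - D0 = dotv (subv (g (p c)) (g x)) h by rewrite dotv_sub_l ED.
  have Hcp : 0 < c by lra.
  have H1 := lip_sq g L (p c) x HL Hl.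
  have Hs : subv (p c) x = (fun j => c * h j).
    by apply: functional_extensionality => j; rewrite /subv /p; ring.
  rewrite Hs in H1.
  have Es : dotv (fun j => c * h j) (fun j => c * h j) = c * c * Q.
    rewrite EQ /dotv -fsum_scal; apply: fsum_ext => j; ring.
  rewrite Es in H1.
  have := inner_lip (subv (g (p c)) (g x)) h L c HL Hcp ltac:(rewrite -EQ; nra).
  rewrite -EQ; nra.
move: Hc1; rewrite /psi /q /phi; cbv [minus_fct plus_fct mult_fct fct_cte Ranalysis1.id]; rewrite Hp1 Hp0.
move=> Hc1.
have : f y - (D0 * 1 + L / 2 * Q * (1 * 1)) - (f x - (D0 * 0 + L / 2 * Q * (0 * 0))) <= 0.
  rewrite Hc1; nra.
move=> H. have E1 : dotv (g x) (subv y x) = D0 by rewrite ED. have E2 : dotv (subv y x) (subv y x) = Q by rewrite EQ. lra.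
Qed.

Ltac coll := repeat progress (rewrite ?fsum_minus -?fsum_scal -?fsum_plus).

Definition Wd {N} {n : 'I_N -> nat} (gam : 'I_N -> R) (u v : bvec n) : R :=
  fsum (fun i => / gam i * dotv (u i) (v i)).

Lemma bsq_ext {N} {n : 'I_N -> nat} (u v : bvec n) : (forall i j, u i j = v i j) -> bsqnorm u = bsqnorm v.
Proof. move=> H; apply: fsum_ext => i; apply: fsum_ext => j; by rewrite H. Qed.

Lemma bw_ext {N} {n : 'I_N -> nat} gam (u v : bvec n) : (forall i j, u i j = v i j) -> bwsqnorm gam u = bwsqnorm gam v.
Proof. move=> H; apply: fsum_ext => i; congr (_ * _); apply: fsum_ext => j; by rewrite H. Qed.

Lemma bsq_nonneg {N} {n : 'I_N -> nat} (u : bvec n) : 0 <= bsqnorm u.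
Proof. apply: fsum_nonneg => i; exact: dotv_nonneg. Qed.

Lemma bw_nonneg {N} {n : 'I_N -> nat} gam (u : bvec n) : (forall i, 0 < gam i) -> 0 <= bwsqnorm gam u.
Proof.
move=> Hg; apply: fsum_nonneg => i; apply: Rmult_le_pos; last exact: dotv_nonneg.
left; apply: Rinv_0_lt_compat; exact: Hg.
Qed.

Lemma block_le_bsq {N} {n : 'I_N -> nat} (u : bvec n) i : dotv (u i) (u i) <= bsqnorm u.
Proof. apply: (fsum_ge_term (fun i => dotv (u i) (u i))) => j; exact: dotv_nonneg. Qed.

Lemma sq_tri e a b c : 0 < e ->
  (a - c) * (a - c) <= (1 + e) * ((a - b) * (a - b)) + (1 + / e) * ((b - c) * (b - c)).
Proof.
move=> He; have := young2 e (a - b) (b - c) He.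
have -> : (a - c) * (a - c) = (a - b) * (a - b) + (b - c) * (b - c) + 2 * ((a - b) * (b - c)) by ring.
lra.
Qed.

Lemma bsq_tri {N} {n : 'I_N -> nat} e (a b c : bvec n) : 0 < e ->
  bsqnorm (bsub a c) <= (1 + e) * bsqnorm (bsub a b) + (1 + / e) * bsqnorm (bsub b c).
Proof.
move=> He; rewrite /bsqnorm /bdot; coll; apply: fsum_le => i.
rewrite /dotv; coll; apply: fsum_le => j; rewrite /bsub; exact: sq_tri.
Qed.

Lemma bsq_tri2 {N} {n : 'I_N -> nat} (a b c : bvec n) :
  bsqnorm (bsub a c) <= 2 * bsqnorm (bsub a b) + 2 * bsqnorm (bsub b c).
Proof.
have := bsq_tri 1 a b c Rlt_0_1; rewrite Rinv_1.
have -> : 1 + 1 = 2 by ring. done.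
Qed.

Lemma bsq_sym {N} {n : 'I_N -> nat} (a b : bvec n) : bsqnorm (bsub a b) = bsqnorm (bsub b a).
Proof. apply: fsum_ext => i; apply: fsum_ext => j; rewrite /bsub; ring. Qed.

Lemma bw_le_bsq {N} {n : 'I_N -> nat} gam (u : bvec n) : (forall i, 0 < gam i) ->
  bwsqnorm gam u <= fsum (fun i => / gam i) * bsqnorm u.
Proof.
move=> Hg; rewrite /bsqnorm /bdot -fsum_scal; apply: fsum_le => i.
apply: Rmult_le_compat_r; first exact: dotv_nonneg.
apply: (fsum_ge_term (fun i => / gam i)) => j; left; apply: Rinv_0_lt_compat; exact: Hg.
Qed.

Lemma bsq_le_bw {N} {n : 'I_N -> nat} gam (u : bvec n) : (forall i, 0 < gam i) ->
  bsqnorm u <= fsum gam * bwsqnorm gam u.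
Proof.
move=> Hg; rewrite /bwsqnorm -fsum_scal; apply: fsum_le => i.
have Hi := Hg i.
have H1 : gam i <= fsum gam by apply: (fsum_ge_term gam) => j; left; exact: Hg.
have H2 := dotv_nonneg (u i).
have -> : fsum gam * (/ gam i * dotv (u i) (u i)) = (fsum gam / gam i) * dotv (u i) (u i) by rewrite /Rdiv; ring.
rewrite -{1}(Rmult_1_l (dotv _ _)); apply: Rmult_le_compat_r => //.
apply: (Rmult_le_reg_r (gam i)) => //.
have -> : fsum gam / gam i * gam i = fsum gam by field; apply: Rgt_not_eq.
lra.
Qed.

Lemma bw_expand {N} {n : 'I_N -> nat} gam t (z1 z2 u1 : bvec n) :
  bwsqnorm gam (bsub (bcomb t z2 z1) u1) = bwsqnorm gam (bsub z1 u1) +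
    2 * t * Wd gam (bsub z1 u1) (bsub z2 z1) + t * t * bwsqnorm gam (bsub z2 z1).
Proof.
rewrite /bwsqnorm /Wd; coll; apply: fsum_ext => i.
rewrite /dotv; coll; apply: fsum_ext => j; rewrite /bsub /bcomb; ring.
Qed.

Lemma Wd_final {N} {n : 'I_N -> nat} gam (z1 z2 u1 u2 : bvec n) :
  Wd gam (bsub z1 u1) (bsub z2 z1) + Wd gam (bsub z2 u2) (bsub z1 z2) =
  Wd gam (bsub u1 u2) (bsub z1 z2) - bwsqnorm gam (bsub z1 z2).
Proof.
rewrite /bwsqnorm /Wd; coll; apply: fsum_ext => i.
rewrite /dotv; coll; apply: fsum_ext => j; rewrite /bsub; ring.
Qed.

Lemma Wd_young {N} {n : 'I_N -> nat} gam (u v : bvec n) : (forall i, 0 < gam i) ->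
  2 * Wd gam u v <= bwsqnorm gam u + bwsqnorm gam v.
Proof.
move=> Hg; rewrite /bwsqnorm /Wd; coll; apply: fsum_le => i.
have Hi : 0 < / gam i by apply: Rinv_0_lt_compat.
rewrite /dotv; coll; apply: fsum_le => j.
have := young2 1 (u i j) (v i j) Rlt_0_1; rewrite Rinv_1 => H.
nra.
Qed.

Lemma lim_t A B C : (forall t, 0 < t <= 1 -> A <= B + t * C) -> A <= B.
Proof.
move=> H; apply: Rnot_lt_le => HBA.
set d := A - B.
have Hd : 0 < d by rewrite /d; lra.
have HC := Rabs_pos C.
have HCle := RRle_abs C.
set t := Rmin 1 (d / (2 * (Rabs C + 1))).
have Hq : 0 < d / (2 * (Rabs C + 1)) by apply: Rdiv_lt_0_compat; lra.
have Ht0 : 0 < t by apply: Rmin_glb_lt; lra.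
have Ht1 : t <= 1 by apply: Rmin_l.
have Ht2 : t <= d / (2 * (Rabs C + 1)) by apply: Rmin_r.
have H1 := H t (conj Ht0 Ht1).
have H2 : t * C <= t * Rabs C by apply: Rmult_le_compat_l; lra.
have H3 : t * Rabs C <= d / (2 * (Rabs C + 1)) * Rabs C by apply: Rmult_le_compat_r.
have H4 : d / (2 * (Rabs C + 1)) * Rabs C < d.
  have -> : d / (2 * (Rabs C + 1)) * Rabs C = d * (Rabs C / (2 * (Rabs C + 1))) by field; apply: Rgt_not_eq; lra.
  have : Rabs C / (2 * (Rabs C + 1)) < 1.
    apply: (Rmult_lt_reg_r (2 * (Rabs C + 1))); first lra.
    have -> : Rabs C / (2 * (Rabs C + 1)) * (2 * (Rabs C + 1)) = Rabs C by field; apply: Rgt_not_eq; lra.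
    lra.
  move=> Hq'; nra.
have Ed : d = A - B by []. lra.
Qed.

Lemma prox_ineq {N} {n : 'I_N -> nat} {G : bvec n -> ereal} {gam u z a w b} :
  in_prox G gam u z -> G z = EFin a -> G w = EFin b ->
  a + / 2 * bwsqnorm gam (bsub z u) <= / 2 * bwsqnorm gam (bsub w u) + b.
Proof.
move=> [a' [Ha' H]] Hz Hw.
rewrite Hz in Ha'; case: Ha' => ->.
by have := H w; rewrite Hw /=.
Qed.

Lemma prox_val {N} {n : 'I_N -> nat} {G : bvec n -> ereal} {gam u z} :
  in_prox G gam u z -> exists a, G z = EFin a.
Proof. by move=> [a [Ha _]]; exists a. Qed.

Lemma prox_half {N} {n : 'I_N -> nat} {G : bvec n -> ereal} {gam u1 z1 z2 a1 a2} :
  convex_fun G -> in_prox G gam u1 z1 -> G z1 = EFin a1 -> G z2 = EFin a2 ->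
  a1 - a2 <= Wd gam (bsub z1 u1) (bsub z2 z1).
Proof.
move=> Hc Hp H1 H2.
apply: (lim_t _ _ (/ 2 * bwsqnorm gam (bsub z2 z1))) => t Ht.
have Hcv := Hc z2 z1 a2 a1 t H2 H1 ltac:(lra).
case E : (G (bcomb t z2 z1)) Hcv => [b|] //= Hb.
have := prox_ineq Hp H1 E; rewrite bw_expand => Hi.
have Hin : t * (a1 - a2) <= t * (Wd gam (bsub z1 u1) (bsub z2 z1) + t * (/ 2 * bwsqnorm gam (bsub z2 z1))).
  nra.
apply: (Rmult_le_reg_l t); lra.
Qed.

Lemma prox_nonexp {N} {n : 'I_N -> nat} {G : bvec n -> ereal} {gam u1 z1 u2 z2} :
  convex_fun G -> (forall i, 0 < gam i) -> in_prox G gam u1 z1 -> in_prox G gam u2 z2 ->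
  bwsqnorm gam (bsub z1 z2) <= bwsqnorm gam (bsub u1 u2).
Proof.
move=> Hc Hg Hp1 Hp2.
have [a1 Ha1] := prox_val Hp1.
have [a2 Ha2] := prox_val Hp2.
have H1 := prox_half Hc Hp1 Ha1 Ha2.
have H2 := prox_half Hc Hp2 Ha2 Ha1.
have H3 := Wd_final gam z1 z2 u1 u2.
have H4 := Wd_young gam (bsub u1 u2) (bsub z1 z2) Hg.
lra.
Qed.

Fixpoint psum (a : nat -> R) (m : nat) : R :=
  match m with O => 0 | S m' => psum a m' + a m' end.

Lemma psum_ext a b m : (forall k, a k = b k) -> psum a m = psum b m.
Proof. move=> H; elim: m => [|m IH] //=; by rewrite IH H. Qed.

Lemma psum_le a b m : (forall k, a k <= b k) -> psum a m <= psum b m.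
Proof. move=> H; elim: m => [|m IH] /=; first lra. have := H m; lra. Qed.

Lemma psum_nonneg a m : (forall k, 0 <= a k) -> 0 <= psum a m.
Proof. move=> H; elim: m => [|m IH] /=; first lra. have := H m; lra. Qed.

Lemma psum_mono a m m' : (forall k, 0 <= a k) -> (m <= m')%N -> psum a m <= psum a m'.
Proof.
move=> H; elim: m' => [|m' IH].
  by rewrite leqn0 => /eqP ->; lra.
rewrite leq_eqVlt => /orP [/eqP -> | Hlt]; first lra.
have := IH Hlt; have := H m'; move=> /= ? ?; lra.
Qed.

Lemma psum_plus a b m : psum (fun k => a k + b k) m = psum a m + psum b m.
Proof. elim: m => [|m IH] /=; [ring | rewrite IH; ring]. Qed.

Lemma psum_scal c a m : psum (fun k => c * a k) m = c * psum a m.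
Proof. elim: m => [|m IH] /=; [ring | rewrite IH; ring]. Qed.

Lemma psum_const c m : psum (fun _ => c) m = INR m * c.
Proof. elim: m => [|m IH]; first by rewrite /=; ring. rewrite S_INR /= IH; ring. Qed.

Lemma psum_swap (a : nat -> nat -> R) K T :
  psum (fun k => psum (a k) T) K = psum (fun s => psum (fun k => a k s) K) T.
Proof.
elim: K => [|K IH] /=.
  by rewrite psum_const; ring.
rewrite IH -psum_plus; apply: psum_ext => s //.
Qed.

Lemma psum_tele (b : nat -> R) s K :
  psum (fun k => b (k + s)%N - b (S (k + s))) K = b s - b (K + s)%N.
Proof.
elim: K => [|K IH] /=; first by rewrite add0n; ring.
rewrite IH addSn; ring.
Qed.

Lemma sum_f_psum a K : sum_f_R0 a K = psum a (S K).
Proof. elim: K => [|K IH] /=; first ring. by rewrite IH. Qed.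

Lemma le_lim_const (u : nat -> R) a l : (forall k, a <= u k) -> Un_cv u l -> a <= l.
Proof.
move=> H Hc; apply: Rnot_lt_le => Hlt.
have [N0 HN0] := Hc (a - l) ltac:(lra).
have := HN0 N0 (Nat.le_refl _); rewrite /R_dist => Habs.
have := H N0; have := Rle_abs (u N0 - l); lra.
Qed.

Lemma eq_of_close X Y : (forall eps, 0 < eps -> Rabs (X - Y) < eps) -> X = Y.
Proof.
move=> H; case: (Req_dec X Y) => // Hne; exfalso.
have Hp : 0 < Rabs (X - Y) by apply: Rabs_pos_lt; lra.
have := H _ Hp; lra.
Qed.

Lemma bnorm_bsq {N} {n : 'I_N -> nat} (u : bvec n) eps : 0 < eps ->
  (bnorm u < eps <-> bsqnorm u < eps * eps).
Proof.
move=> He; have H0 := bsq_nonneg u.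
rewrite /bnorm; split => H.
- have Hs := sqrt_pos (bsqnorm u).
  have := sqrt_sqrt _ H0; nra.
- rewrite -(sqrt_square eps); last lra.
  apply: sqrt_lt_1_alt; lra.
Qed.

Lemma bnorm_sq {N} {n : 'I_N -> nat} (u : bvec n) : bnorm u * bnorm u = bsqnorm u.
Proof. rewrite /bnorm sqrt_sqrt //; exact: bsq_nonneg. Qed.

Lemma bnorm_nonneg {N} {n : 'I_N -> nat} (u : bvec n) : 0 <= bnorm u.
Proof. exact: sqrt_pos. Qed.

Lemma near_both {N} {n : 'I_N -> nat} (a b : nat -> bvec n) c :
  Un_cv (fun k => bsqnorm (bsub (a k) (b k))) 0 -> cluster_point a c ->
  forall d, 0 < d -> forall M : nat, exists k, (M <= k)%N /\
    bsqnorm (bsub (a k) c) < d /\ bsqnorm (bsub (b k) c) < d.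
Proof.
move=> Hr Hcl d Hd M.
have [M1 HM1] := Hr (d / 4) ltac:(lra).
have Hs : 0 < sqrt (d / 4) by apply: sqrt_lt_R0; lra.
have [k [Hk Hnk]] := Hcl _ Hs (maxn M M1).
exists k; split; first by apply: leq_trans Hk; apply: leq_maxl.
have Hk1 : (M1 <= k)%coq_nat by apply/leP; apply: leq_trans Hk; apply: leq_maxr.
have := HM1 k Hk1; rewrite /R_dist Rminus_0_r => Hrk.
have Hrk' := Rle_abs (bsqnorm (bsub (a k) (b k))).
move/(bnorm_bsq _ _ Hs): Hnk; rewrite sqrt_sqrt; last lra.
move=> Hak.
have := bsq_tri2 (b k) (a k) c; rewrite (bsq_sym (b k) (a k)) => Ht.
split; lra.
Qed.

Lemma cluster_transfer {N} {n : 'I_N -> nat} (a b : nat -> bvec n) c :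
  Un_cv (fun k => bsqnorm (bsub (a k) (b k))) 0 -> cluster_point a c -> cluster_point b c.
Proof.
move=> Hr Hcl eps He M.
have He2 : 0 < eps * eps by nra.
have [k [Hk [_ Hb]]] := near_both a b c Hr Hcl (eps * eps) He2 M.
exists k; split => //; by apply/(bnorm_bsq _ _ He).
Qed.

Lemma dotv_scal_l {m} c (u v : vec m) : dotv (fun j => c * u j) v = c * dotv u v.
Proof. rewrite /dotv -fsum_scal; apply: fsum_ext => j; ring. Qed.

Lemma dotv_opp_l {m} (u v : vec m) : dotv (fun j => - u j) v = - dotv u v.
Proof.
have -> : - dotv u v = (-1) * dotv u v by ring.
rewrite -dotv_scal_l; apply: fsum_ext => j; ring.
Qed.

Lemma dotv_zero_r {m} (u : vec m) : dotv u (fun _ => 0) = 0.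
Proof. rewrite /dotv (@fsum_ext m _ (fun _ => 0)); [exact: fsum_zero | move=> j /=; ring]. Qed.

Lemma subv_self {m} (v : vec m) : subv v v = (fun _ => 0).
Proof. apply: functional_extensionality => j; rewrite /subv; ring. Qed.

Lemma dotv_tri2 {m} (a b c : vec m) :
  dotv (subv a c) (subv a c) <= 2 * dotv (subv a b) (subv a b) + 2 * dotv (subv b c) (subv b c).
Proof.
rewrite /dotv; coll; apply: fsum_le => j; rewrite /subv.
have := sq_tri 1 (a j) (b j) (c j) Rlt_0_1; rewrite Rinv_1.
have -> : 1 + 1 = 2 by ring. done.
Qed.

Lemma dotv_abs {m} e (u v : vec m) : 0 < e ->
  2 * Rabs (dotv u v) <= e * dotv u u + / e * dotv v v.
Proof.
move=> He; case: (Rle_lt_dec 0 (dotv u v)) => Hs.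
  rewrite Rabs_right; last lra. exact: dotv_young.
rewrite Rabs_left //.
have := dotv_young e (fun j => - u j) v He.
rewrite dotv_opp_l.
have -> : dotv (fun j => - u j) (fun j => - u j) = dotv u u by apply: fsum_ext => j; ring.
lra.
Qed.

Lemma neg_grad {m} (f : vec m -> R) g : has_gradient f g ->
  has_gradient (fun v => - f v) (fun v j => - g v j).
Proof.
move=> H x eps He; have [d [Hd Hh]] := H x eps He.
exists d; split => // h Hlt.
have := Hh h Hlt; rewrite dotv_opp_l.
have -> : - f (addv x h) - - f x - - dotv (g x) h = - (f (addv x h) - f x - dotv (g x) h) by ring.
by rewrite Rabs_Ropp.
Qed.

Lemma neg_lip {m} (g : vec m -> vec m) L : lipschitz g L -> lipschitz (fun v j => - g v j) L.
Proof.
move=> H x y; have := H x y.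
have -> : normv (subv (fun j => - g x j) (fun j => - g y j)) = normv (subv (g x) (g y)).
  rewrite /normv; congr sqrt; apply: fsum_ext => j; rewrite /subv; ring.
done.
Qed.

Lemma descent_low {m} (f : vec m -> R) g L : has_gradient f g -> 0 <= L -> lipschitz g L ->
  forall x y, f x + dotv (g x) (subv y x) - L / 2 * dotv (subv y x) (subv y x) <= f y.
Proof.
move=> Hg HL Hl x y.
have := descent _ _ _ (neg_grad _ _ Hg) HL (neg_lip _ _ Hl) x y.
rewrite dotv_opp_l; lra.
Qed.

Section Main.
Variables (N : nat) (n : 'I_N -> nat)
  (f : forall i : 'I_N, vec (n i) -> R)
  (gf : forall i : 'I_N, vec (n i) -> vec (n i))
  (L : 'I_N -> R) (G : bvec n -> ereal) (gam : 'I_N -> R).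
Hypothesis HN : (1 <= N)%N.
Hypothesis Hgrad : forall i, has_gradient (f i) (gf i).
Hypothesis HL : forall i, 0 <= L i /\ lipschitz (gf i) (L i).
Hypothesis Hgam : forall i, 0 < gam i /\ gam i * L i < INR N.

Lemma NR_pos : 0 < INR N.
Proof. apply: lt_0_INR; apply/ltP; exact: HN. Qed.

Lemma gam_pos i : 0 < gam i. Proof. by case: (Hgam i). Qed.
Lemma L_nonneg i : 0 <= L i. Proof. by case: (HL i). Qed.

Definition blk i (xi zi : vec (n i)) : R :=
  / INR N * f i xi + dotv (fun j => / INR N * gf i xi j) (subv zi xi)
  + / 2 * (/ gam i * dotv (subv zi xi) (subv zi xi)).

Definition ci i := / 2 * (/ gam i - L i / INR N).
Definition Ci i := / 2 * (L i / INR N + / gam i).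

Lemma ci_pos i : 0 < ci i.
Proof.
rewrite /ci; have [Hg Hgl] := Hgam i; have HNp := NR_pos.
have : L i / INR N < / gam i.
  apply: (Rmult_lt_reg_r (gam i * INR N)); first nra.
  have -> : L i / INR N * (gam i * INR N) = gam i * L i by field; apply: Rgt_not_eq.
  have -> : / gam i * (gam i * INR N) = INR N by field; apply: Rgt_not_eq.
  done.
move=> H; lra.
Qed.

Lemma Ci_pos i : 0 <= Ci i.
Proof.
rewrite /Ci; have Hg := gam_pos i; have HNp := NR_pos; have Hl := L_nonneg i.
have : 0 <= L i / INR N by apply: Rmult_le_pos; [lra | left; apply: Rinv_0_lt_compat; lra].
have : 0 < / gam i by apply: Rinv_0_lt_compat.
move=> *; lra.
Qed.

Lemma val_eq (x w : bvec n) : Fsum f x + bdot (gradF gf x) (bsub w x) + / 2 * bwsqnorm gam (bsub w x)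
  = fsum (fun i => blk i (x i) (w i)).
Proof. rewrite /Fsum /bdot /bwsqnorm; coll; apply: fsum_ext => i; by rewrite /blk. Qed.

Definition Cx (x : bvec n) := / 2 * fsum (fun i => gam i * dotv (@gradF N n gf x i) (@gradF N n gf x i)).

Lemma wn_shift (x w : bvec n) :
  / 2 * bwsqnorm gam (bsub w (fb_point gf gam x)) =
  / 2 * bwsqnorm gam (bsub w x) + bdot (gradF gf x) (bsub w x) + Cx x.
Proof.
rewrite /Cx /bwsqnorm /bdot; coll; apply: fsum_ext => i.
have Hg := gam_pos i.
rewrite /dotv; coll; apply: fsum_ext => j; rewrite /bsub /fb_point.
field; apply: Rgt_not_eq; exact: Hg.
Qed.

Lemma FBE_lower {x z w : bvec n} {a g} : in_T gf G gam x z -> G z = EFin a -> G w = EFin g ->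
  fsum (fun i => blk i (x i) (z i)) + a <= fsum (fun i => blk i (x i) (w i)) + g.
Proof.
move=> HT Hz Hw.
have := prox_ineq HT Hz Hw; rewrite !wn_shift -!val_eq; lra.
Qed.

Lemma is_FBE_at (x z : bvec n) a : in_T gf G gam x z -> G z = EFin a ->
  is_FBE f gf G gam x (fsum (fun i => blk i (x i) (z i)) + a).
Proof.
move=> HT Hz; split.
- move=> r [w [g [Hw ->]]].
  have := FBE_lower HT Hz Hw; rewrite -!val_eq; lra.
- move=> m' Hm'; apply: Hm'; exists z, a; split => //; rewrite -val_eq; ring.
Qed.

Lemma blk_self i (v : vec (n i)) : blk i v v = / INR N * f i v.
Proof. rewrite /blk subv_self !dotv_zero_r; ring. Qed.

Lemma blk_ge i (xi zi : vec (n i)) :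
  / INR N * f i zi + ci i * dotv (subv zi xi) (subv zi xi) <= blk i xi zi.
Proof.
have Hd := descent _ _ _ (Hgrad i) (L_nonneg i) (proj2 (HL i)) xi zi.
have HNp := NR_pos.
rewrite /blk dotv_scal_l.
have E : / INR N * f i xi + / INR N * dotv (gf i xi) (subv zi xi) +
   / 2 * (/ gam i * dotv (subv zi xi) (subv zi xi)) -
   (/ INR N * f i zi + ci i * dotv (subv zi xi) (subv zi xi)) =
   / INR N * (f i xi + dotv (gf i xi) (subv zi xi) + L i / 2 * dotv (subv zi xi) (subv zi xi) - f i zi).
  have Hgi := gam_pos i; rewrite /ci; field; repeat split; apply: Rgt_not_eq; lra.
have : 0 <= / INR N * (f i xi + dotv (gf i xi) (subv zi xi) + L i / 2 * dotv (subv zi xi) (subv zi xi) - f i zi).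
  apply: Rmult_le_pos; [left; exact: Rinv_0_lt_compat | lra].
lra.
Qed.

Lemma blk_le i (xi zi : vec (n i)) :
  blk i xi zi <= / INR N * f i zi + Ci i * dotv (subv zi xi) (subv zi xi).
Proof.
have Hd := descent_low _ _ _ (Hgrad i) (L_nonneg i) (proj2 (HL i)) xi zi.
have HNp := NR_pos.
rewrite /blk dotv_scal_l.
have E : / INR N * f i xi + / INR N * dotv (gf i xi) (subv zi xi) +
   / 2 * (/ gam i * dotv (subv zi xi) (subv zi xi)) -
   (/ INR N * f i zi + Ci i * dotv (subv zi xi) (subv zi xi)) =
   / INR N * (f i xi + dotv (gf i xi) (subv zi xi) - L i / 2 * dotv (subv zi xi) (subv zi xi) - f i zi).
  have Hgi := gam_pos i; rewrite /Ci; field; repeat split; apply: Rgt_not_eq; lra.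
have : / INR N * (f i xi + dotv (gf i xi) (subv zi xi) - L i / 2 * dotv (subv zi xi) (subv zi xi) - f i zi) <= 0.
  rewrite -(Rmult_0_r (/ INR N)); apply: Rmult_le_compat_l; [left; exact: Rinv_0_lt_compat | lra].
lra.
Qed.

Lemma Fsum_blk (v : bvec n) : fsum (fun i => blk i (v i) (v i)) = Fsum f v.
Proof. rewrite /Fsum -fsum_scal; apply: fsum_ext => i; exact: blk_self. Qed.

Definition Cmax := fsum Ci.

Lemma Ci_le i : Ci i <= Cmax.
Proof. apply: (fsum_ge_term Ci) => j; exact: Ci_pos. Qed.

Lemma blk_sum_le (x w : bvec n) :
  fsum (fun i => blk i (x i) (w i)) <= Fsum f w + Cmax * bsqnorm (bsub w x).
Proof.
rewrite /Fsum /bsqnorm /bdot; coll; apply: fsum_le => i.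
apply: (Rle_trans _ _ _ (blk_le _ _ _)); apply: Rplus_le_compat_l.
apply: Rmult_le_compat_r; [exact: dotv_nonneg | exact: Ci_le].
Qed.

Lemma blk_sum_ge (x w : bvec n) : Fsum f w <= fsum (fun i => blk i (x i) (w i)).
Proof.
rewrite /Fsum -fsum_scal; apply: fsum_le => i.
apply: Rle_trans (blk_ge _ _ _).
have := ci_pos i; have := dotv_nonneg (subv (w i) (x i)); nra.
Qed.

Lemma Wd_abs e (u v : bvec n) : 0 < e ->
  2 * Rabs (Wd gam u v) <= / e * bwsqnorm gam u + e * bwsqnorm gam v.
Proof.
move=> He.
have Hie : 0 < / e by apply: Rinv_0_lt_compat.
have key : forall s, s = 1 \/ s = -1 -> 2 * (s * Wd gam u v) <= / e * bwsqnorm gam u + e * bwsqnorm gam v.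
  move=> s Hs; rewrite /Wd /bwsqnorm; coll; apply: fsum_le => i.
  have Hg : 0 < / gam i by apply: Rinv_0_lt_compat; exact: gam_pos.
  rewrite /dotv; coll; apply: fsum_le => j.
  have := young2 (/ e) (s * u i j) (v i j) Hie; rewrite Rinv_inv => Hy.
  have Hs2 : s * s = 1 by case: Hs => ->; ring.
  have E1 : (s * u i j) * (s * u i j) = u i j * u i j by nra.
  rewrite E1 in Hy.
  have := Rmult_le_compat_l _ _ _ (Rlt_le _ _ Hg) Hy.
  move=> H2; nra.
have : Rabs (Wd gam u v) <= (/ e * bwsqnorm gam u + e * bwsqnorm gam v) / 2.
  apply: Rabs_le; split.
  - have := key (-1) (or_intror erefl); lra.
  - have := key 1 (or_introl erefl); lra.
lra.
Qed.

Lemma bw_diff (a b : bvec n) :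
  bwsqnorm gam a - bwsqnorm gam b = bwsqnorm gam (bsub a b) + 2 * Wd gam (bsub a b) b.
Proof.
rewrite /bwsqnorm /Wd; coll; apply: fsum_ext => i.
rewrite /dotv; coll; apply: fsum_ext => j; rewrite /bsub; ring.
Qed.

Definition Wsum := fsum (fun i => / gam i).
Definition Gsum := fsum gam.

Lemma Wsum_nonneg : 0 <= Wsum.
Proof. apply: fsum_nonneg => i; left; apply: Rinv_0_lt_compat; exact: gam_pos. Qed.

Lemma bw_le (u : bvec n) : bwsqnorm gam u <= Wsum * bsqnorm u.
Proof. apply: bw_le_bsq => i; exact: gam_pos. Qed.

Lemma bw_cont (b : bvec n) : forall eps, 0 < eps -> exists d, 0 < d /\
  forall a, bsqnorm (bsub a b) < d -> Rabs (bwsqnorm gam a - bwsqnorm gam b) < eps.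
Proof.
move=> eps He.
have Hb := bw_nonneg gam b gam_pos.
set beta := bwsqnorm gam b in Hb *.
set e := eps / (2 * (beta + 1)).
have Hep : 0 < e by apply: Rdiv_lt_0_compat; lra.
have Hie : 0 < / e by apply: Rinv_0_lt_compat.
have HW := Wsum_nonneg.
set M := (1 + / e) * Wsum + 1.
have HM : 0 < M by rewrite /M; nra.
exists (eps / (2 * M)); split; first by apply: Rdiv_lt_0_compat; lra.
move=> a Ha.
rewrite bw_diff.
have Hd0 := bw_nonneg gam (bsub a b) gam_pos.
have Hd1 := bw_le (bsub a b).
have Hs0 := bsq_nonneg (bsub a b).
have Hab := Wd_abs e (bsub a b) b Hep.
have Heb : e * beta < eps / 2.
  have -> : e * beta = eps / 2 * (beta / (beta + 1)) by rewrite /e; field; lra.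
  have : beta / (beta + 1) < 1.
    apply: (Rmult_lt_reg_r (beta + 1)); first lra.
    have -> : beta / (beta + 1) * (beta + 1) = beta by field; lra.
    lra.
  move=> H; nra.
have Hrest : (1 + / e) * bwsqnorm gam (bsub a b) < eps / 2.
  have H1 : (1 + / e) * bwsqnorm gam (bsub a b) <= (1 + / e) * (Wsum * bsqnorm (bsub a b)).
    apply: Rmult_le_compat_l; lra.
  have H2 : (1 + / e) * (Wsum * bsqnorm (bsub a b)) <= M * bsqnorm (bsub a b).
    rewrite /M; nra.
  have H3 : M * bsqnorm (bsub a b) < M * (eps / (2 * M)) by apply: Rmult_lt_compat_l.
  have E3 : M * (eps / (2 * M)) = eps / 2 by field; lra.
  rewrite E3 in H3.
  lra.
have Habs : Rabs (bwsqnorm gam (bsub a b) + 2 * Wd gam (bsub a b) b) <=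
   bwsqnorm gam (bsub a b) + 2 * Rabs (Wd gam (bsub a b) b).
  apply: Rle_trans (Rabs_triang _ _) _.
  rewrite Rabs_mult (Rabs_right 2); last lra.
  rewrite Rabs_right; lra.
move: Heb; rewrite /beta => Heb. lra.
Qed.

Definition Kf := fsum (fun i => 2 + 2 * ((gam i / INR N) * (gam i / INR N)) * (L i * L i)).

Lemma Kf_terms i : 0 <= 2 + 2 * ((gam i / INR N) * (gam i / INR N)) * (L i * L i).
Proof.
have H1 := Rle_0_sqr (gam i / INR N); have H2 := Rle_0_sqr (L i).
rewrite /Rsqr in H1 H2; nra.
Qed.

Lemma Kf_nonneg : 0 <= Kf.
Proof. apply: fsum_nonneg => i; exact: Kf_terms. Qed.

Lemma sq_aux p s q : (p - s * q) * (p - s * q) <= 2 * (p * p) + 2 * (s * s) * (q * q).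
Proof. have := Rle_0_sqr (p + s * q); rewrite /Rsqr; nra. Qed.

Lemma fb_lip (y1 y2 : bvec n) :
  bsqnorm (bsub (fb_point gf gam y1) (fb_point gf gam y2)) <= Kf * bsqnorm (bsub y1 y2).
Proof.
rewrite /bsqnorm /bdot /Kf -fsum_scal; apply: fsum_le => i.
have HNp := NR_pos.
have E : dotv (@bsub N n (fb_point gf gam y1) (fb_point gf gam y2) i) (@bsub N n (fb_point gf gam y1) (fb_point gf gam y2) i)
  = dotv (fun j => subv (y1 i) (y2 i) j - (gam i / INR N) * subv (gf i (y1 i)) (gf i (y2 i)) j)
         (fun j => subv (y1 i) (y2 i) j - (gam i / INR N) * subv (gf i (y1 i)) (gf i (y2 i)) j).
  apply: fsum_ext => j; rewrite /bsub /fb_point /gradF /subv /Rdiv.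
  ring.
rewrite E.
have H1 : dotv (fun j => subv (y1 i) (y2 i) j - (gam i / INR N) * subv (gf i (y1 i)) (gf i (y2 i)) j)
         (fun j => subv (y1 i) (y2 i) j - (gam i / INR N) * subv (gf i (y1 i)) (gf i (y2 i)) j)
   <= 2 * dotv (subv (y1 i) (y2 i)) (subv (y1 i) (y2 i)) +
      2 * ((gam i / INR N) * (gam i / INR N)) * dotv (subv (gf i (y1 i)) (gf i (y2 i))) (subv (gf i (y1 i)) (gf i (y2 i))).
  rewrite /dotv; coll; apply: fsum_le => j; exact: sq_aux.
have H2 := lip_sq (gf i) (L i) (y1 i) (y2 i) (L_nonneg i) (proj2 (HL i)).
have H3 : 0 <= (gam i / INR N) * (gam i / INR N) by have := Rle_0_sqr (gam i / INR N); rewrite /Rsqr.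
have Hd := dotv_nonneg (subv (y1 i) (y2 i)).
have H4 : 2 + 2 * ((gam i / INR N) * (gam i / INR N)) * (L i * L i) <= Kf.
  apply: (fsum_ge_term (fun i => 2 + 2 * ((gam i / INR N) * (gam i / INR N)) * (L i * L i))) => j.
  exact: Kf_terms.
change (@bsub N n y1 y2 i) with (subv (y1 i) (y2 i)).
apply: (Rle_trans _ _ _ H1).
apply: (Rle_trans _ ((2 + 2 * ((gam i / INR N) * (gam i / INR N)) * (L i * L i)) * dotv (subv (y1 i) (y2 i)) (subv (y1 i) (y2 i)))).
  nra.
apply: Rmult_le_compat_r => //.
Qed.

Lemma Fsum_cont (c : bvec n) : forall eps, 0 < eps -> exists d, 0 < d /\
  forall y, bsqnorm (bsub y c) < d -> Rabs (Fsum f y - Fsum f c) < eps.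
Proof.
move=> eps He.
pose gN i : vec (n i) := fun j => / INR N * gf i (c i) j.
pose Gc := fsum (fun i => dotv (gN i) (gN i)).
have HGc : 0 <= Gc by apply: fsum_nonneg => i; exact: dotv_nonneg.
pose K i := / 2 * / gam i + Ci i.
have HK : forall i, 0 <= K i.
  move=> i; rewrite /K; have := Ci_pos i; have := gam_pos i => Hg.
  have : 0 < / gam i by apply: Rinv_0_lt_compat. move=> *; lra.
pose Km := fsum K.
have HKm : 0 <= Km by apply: fsum_nonneg.
pose e := eps / (2 * (Gc + 1)).
have Hep : 0 < e by apply: Rdiv_lt_0_compat; lra.
have Hie : 0 < / e by apply: Rinv_0_lt_compat.
pose K' := / 2 * / e + Km.
have HK' : 0 < K' by rewrite /K'; lra.
exists (eps / (2 * (K' + 1))); split; first by apply: Rdiv_lt_0_compat; lra.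
move=> y Hy.
have Hs0 := bsq_nonneg (bsub y c).
have Hpt : forall i,
   Rabs (/ INR N * f i (y i) - / INR N * f i (c i)) <=
   / 2 * (e * dotv (gN i) (gN i) + / e * dotv (subv (y i) (c i)) (subv (y i) (c i)))
   + K i * dotv (subv (y i) (c i)) (subv (y i) (c i)).
  move=> i.
  have H1 := blk_ge i (c i) (y i).
  have H2 := blk_le i (c i) (y i).
  have H3 := dotv_abs e (gN i) (subv (y i) (c i)) Hep.
  have H4 := ci_pos i.
  have H5 := dotv_nonneg (subv (y i) (c i)).
  have H6 := Rle_abs (dotv (gN i) (subv (y i) (c i))).
  have H7 : - dotv (gN i) (subv (y i) (c i)) <= Rabs (dotv (gN i) (subv (y i) (c i))).
    rewrite -Rabs_Ropp; exact: Rle_abs.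
  move: H1 H2; rewrite /blk => H1 H2.
  rewrite /gN in H3 H6 H7 *.
  have H8 : 0 <= ci i * dotv (subv (y i) (c i)) (subv (y i) (c i)) by nra.
  have H9 : 0 <= Ci i * dotv (subv (y i) (c i)) (subv (y i) (c i)) by have := Ci_pos i; nra.
  have H10 : 0 <= / 2 * (/ gam i * dotv (subv (y i) (c i)) (subv (y i) (c i))).
    have : 0 < / gam i by apply: Rinv_0_lt_compat; exact: gam_pos.
    move=> ?; nra.
  apply: Rabs_le; split; rewrite /K; lra.
have Hsum : Rabs (Fsum f y - Fsum f c) <= fsum (fun i => / 2 * (e * dotv (gN i) (gN i) + / e * dotv (subv (y i) (c i)) (subv (y i) (c i)))
   + K i * dotv (subv (y i) (c i)) (subv (y i) (c i))).
  have E : Fsum f y - Fsum f c = fsum (fun i => / INR N * f i (y i) - / INR N * f i (c i)).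
    by rewrite /Fsum -!fsum_scal fsum_minus.
  rewrite E; apply: Rabs_le; split.
  - rewrite -fsum_opp; apply: fsum_le => i.
    have := Hpt i; move/abs_between => /= [? ?]; lra.
  - apply: fsum_le => i; have := Hpt i; move/abs_between => [? ?]; lra.
have Hb : fsum (fun i => / 2 * (e * dotv (gN i) (gN i) + / e * dotv (subv (y i) (c i)) (subv (y i) (c i)))
   + K i * dotv (subv (y i) (c i)) (subv (y i) (c i))) <=
   / 2 * e * Gc + (/ 2 * / e + Km) * bsqnorm (bsub y c).
  rewrite /Gc /bsqnorm /bdot /Km -fsum_scal Rmult_plus_distr_r -fsum_scal; coll.
  apply: fsum_le => i.
  have := fsum_ge_term K i HK; have := dotv_nonneg (subv (y i) (c i)).
  change (@bsub N n y c i) with (subv (y i) (c i)).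
  move=> ? ?; nra.
have Hc1 : / 2 * e * Gc <= eps / 4.
  have -> : / 2 * e * Gc = eps / 4 * (Gc / (Gc + 1)) by rewrite /e; field; lra.
  have : Gc / (Gc + 1) <= 1.
    apply: (Rmult_le_reg_r (Gc + 1)); first lra.
    have -> : Gc / (Gc + 1) * (Gc + 1) = Gc by field; lra.
    lra.
  move=> ?; nra.
have Hc2 : (/ 2 * / e + Km) * bsqnorm (bsub y c) < eps / 2.
  have H1 : (/ 2 * / e + Km) * bsqnorm (bsub y c) <= (K' + 1) * bsqnorm (bsub y c).
    rewrite /K'; nra.
  have H2 : (K' + 1) * bsqnorm (bsub y c) < (K' + 1) * (eps / (2 * (K' + 1))).
    apply: Rmult_lt_compat_l => //; lra.
  have E3 : (K' + 1) * (eps / (2 * (K' + 1))) = eps / 2 by field; lra.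
  lra.
lra.
Qed.

Lemma Qcont (c w : bvec n) : forall eps, 0 < eps -> exists d, 0 < d /\
  forall y1 y2, bsqnorm (bsub y1 c) < d -> bsqnorm (bsub y2 c) < d ->
  Rabs ((/ 2 * bwsqnorm gam (bsub w (fb_point gf gam y1)) - / 2 * bwsqnorm gam (bsub y2 (fb_point gf gam y1)))
     - (/ 2 * bwsqnorm gam (bsub w (fb_point gf gam c)) - / 2 * bwsqnorm gam (bsub c (fb_point gf gam c)))) < eps.
Proof.
move=> eps He.
have [d1 [Hd1 H1]] := bw_cont (bsub w (fb_point gf gam c)) eps He.
have [d2 [Hd2 H2]] := bw_cont (bsub c (fb_point gf gam c)) eps He.
have HK := Kf_nonneg.
have Ha : 0 < d1 / (Kf + 1) by apply: Rdiv_lt_0_compat; lra.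
have Hb : 0 < d2 / (4 * (Kf + 1)) by apply: Rdiv_lt_0_compat; lra.
exists (Rmin (d1 / (Kf + 1)) (d2 / (4 * (Kf + 1)))); split; first by apply: Rmin_glb_lt.
move=> y1 y2 Hy1 Hy2.
have Hm1 := Rmin_l (d1 / (Kf + 1)) (d2 / (4 * (Kf + 1))).
have Hm2 := Rmin_r (d1 / (Kf + 1)) (d2 / (4 * (Kf + 1))).
set d := Rmin _ _ in Hy1 Hy2 Hm1 Hm2.
have Hfb := fb_lip y1 c.
have Hs1 := bsq_nonneg (bsub y1 c).
have Hs2 := bsq_nonneg (bsub y2 c).
have Hk1 : (Kf + 1) * d <= d1.
  have := Rmult_le_compat_l (Kf + 1) _ _ ltac:(lra) Hm1.
  have -> : (Kf + 1) * (d1 / (Kf + 1)) = d1 by field; lra. done.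
have Hk2 : 4 * (Kf + 1) * d <= d2.
  have := Rmult_le_compat_l (4 * (Kf + 1)) _ _ ltac:(lra) Hm2.
  have -> : 4 * (Kf + 1) * (d2 / (4 * (Kf + 1))) = d2 by field; lra. done.
have HKd : Kf * bsqnorm (bsub y1 c) <= Kf * d by apply: Rmult_le_compat_l => //; lra.
have A1 : bsqnorm (bsub (bsub w (fb_point gf gam y1)) (bsub w (fb_point gf gam c))) < d1.
  rewrite (bsq_ext (bsub (bsub w (fb_point gf gam y1)) (bsub w (fb_point gf gam c))) (bsub (fb_point gf gam c) (fb_point gf gam y1))); last first.
    by move=> i j; rewrite /bsub; ring.
  rewrite bsq_sym; lra.
have A2 : bsqnorm (bsub (bsub y2 (fb_point gf gam y1)) (bsub c (fb_point gf gam c))) < d2.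
  have T := bsq_tri2 (bsub y2 (fb_point gf gam y1)) (bsub c (fb_point gf gam y1)) (bsub c (fb_point gf gam c)).
  rewrite (bsq_ext (bsub (bsub y2 (fb_point gf gam y1)) (bsub c (fb_point gf gam y1))) (bsub y2 c)) in T; last first.
    by move=> i j; rewrite /bsub; ring.
  rewrite (bsq_ext (bsub (bsub c (fb_point gf gam y1)) (bsub c (fb_point gf gam c))) (bsub (fb_point gf gam c) (fb_point gf gam y1))) in T; last first.
    by move=> i j; rewrite /bsub; ring.
  rewrite (bsq_sym (fb_point gf gam c)) in T; lra.
have B1 := H1 _ A1.
have B2 := H2 _ A2.
move/Rabs_def2: B1 => [B1a B1b].
move/Rabs_def2: B2 => [B2a B2b].
apply: Rabs_def1; lra.
Qed.

Hypothesis HGconvex : convex_fun G.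
Variables (amin : R) (wmin : bvec n).
Hypothesis Hmin : forall y, ele (EFin amin) (PhiF f G y).
Variables (x z : nat -> bvec n) (I : nat -> 'I_N -> bool).
Hypothesis HT : forall k, in_T gf G gam (x k) (z k).
Hypothesis Hupd : forall k i, x (S k) i = if I (S k) i then z k i else x k i.
Variable T : nat.
Hypothesis Hcyc : forall (k : nat) (i : 'I_N), exists t : nat, (1 <= t <= T)%N /\ I (k + t)%N i = true.

Definition gval (e : ereal) := match e with EFin r => r | EPInf => 0 end.
Definition av k := gval (G (z k)).
Lemma Hav k : G (z k) = EFin (av k).
Proof. have [a Ha] := prox_val (HT k); by rewrite /av Ha. Qed.

Definition phi k := fsum (fun i => blk i (x k i) (z k i)) + av k.
Definition Phz k := Fsum f (z k) + av k.
Definition rr k := bsqnorm (bsub (x k) (z k)).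
Definition Dst k := bsqnorm (bsub (x (S k)) (x k)).

Lemma phi_FBE k : is_FBE f gf G gam (x k) (phi k).
Proof. exact: is_FBE_at (HT k) (Hav k). Qed.

Lemma PhiF_z k : PhiF f G (z k) = EFin (Phz k).
Proof. by rewrite /PhiF Hav. Qed.

Lemma Phz_le_phi k : Phz k <= phi k.
Proof. rewrite /Phz /phi; have := blk_sum_ge (x k) (z k); lra. Qed.

Lemma phi_le_Phz k : phi k <= Phz k + Cmax * rr k.
Proof. rewrite /Phz /phi /rr bsq_sym; have := blk_sum_le (x k) (z k); lra. Qed.

Lemma amin_le_Phz k : amin <= Phz k.
Proof. by have := Hmin (z k); rewrite PhiF_z. Qed.

Lemma amin_le k : amin <= phi k.
Proof. have := amin_le_Phz k; have := Phz_le_phi k; lra. Qed.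

Definition cmin := / fsum (fun i => / ci i).

Lemma invci_pos i : 0 < / ci i.
Proof. apply: Rinv_0_lt_compat; exact: ci_pos. Qed.

Lemma cmin_pos : 0 < cmin.
Proof.
apply: Rinv_0_lt_compat.
have H := fsum_ge_term (fun i => / ci i) (Ordinal HN) (fun j => Rlt_le _ _ (invci_pos j)).
have := invci_pos (Ordinal HN); lra.
Qed.

Lemma cmin_le i : cmin <= ci i.
Proof.
have H := fsum_ge_term (fun i => / ci i) i (fun j => Rlt_le _ _ (invci_pos j)).
rewrite -(Rinv_inv (ci i)) /cmin.
apply: Rinv_le_contravar => //; exact: invci_pos.
Qed.

Lemma Dst_nonneg k : 0 <= Dst k. Proof. exact: bsq_nonneg. Qed.
Lemma rr_nonneg k : 0 <= rr k. Proof. exact: bsq_nonneg. Qed.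

Lemma phi_step k : phi (S k) + cmin * Dst k <= phi k.
Proof.
have H1 := FBE_lower (HT (S k)) (Hav (S k)) (Hav k).
have H2 : fsum (fun i => blk i (x (S k) i) (z k i)) + cmin * Dst k <= fsum (fun i => blk i (x k i) (z k i)).
  rewrite /Dst /bsqnorm /bdot -fsum_scal -fsum_plus; apply: fsum_le => i.
  change (@bsub N n (x (S k)) (x k) i) with (subv (x (S k) i) (x k i)).
  rewrite Hupd; case: (I (S k) i).
  - rewrite blk_self. have := blk_ge i (x k i) (z k i); have := cmin_le i.
    have := dotv_nonneg (subv (z k i) (x k i)); nra.
  - rewrite subv_self dotv_zero_r; lra.
rewrite /phi; lra.
Qed.

Lemma phi_decr k : phi (S k) <= phi k.
Proof. have := phi_step k; have := cmin_pos; have := Dst_nonneg k; nra. Qed.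

Lemma phi_le0 k : phi k <= phi 0.
Proof. elim: k => [|k IH]; first lra. have := phi_decr k; lra. Qed.

Lemma Dst_le k : Dst k <= / cmin * (phi k - phi (S k)).
Proof.
have := phi_step k; have Hc := cmin_pos.
move=> H; apply: (Rmult_le_reg_l cmin) => //.
rewrite -Rmult_assoc Rinv_r; last lra. lra.
Qed.

Definition Bd := / cmin * (phi 0 - amin).

Lemma Dst_tele s K : psum (fun k => Dst (k + s)%N) K <= Bd.
Proof.
apply: Rle_trans (psum_le _ _ K (fun k => Dst_le (k + s)%N)) _.
rewrite psum_scal psum_tele /Bd.
apply: Rmult_le_compat_l; first by left; apply: Rinv_0_lt_compat; exact: cmin_pos.
have := phi_le0 s; have := amin_le (K + s)%N; lra.
Qed.

Definition Kz := Gsum * (Wsum * Kf).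

Lemma Gsum_nonneg : 0 <= Gsum.
Proof. apply: fsum_nonneg => i; left; exact: gam_pos. Qed.

Lemma z_lip j k : bsqnorm (bsub (z j) (z k)) <= Kz * bsqnorm (bsub (x j) (x k)).
Proof.
have H1 := bsq_le_bw gam (bsub (z j) (z k)) gam_pos.
have H2 := prox_nonexp HGconvex gam_pos (HT j) (HT k).
have H3 := bw_le (bsub (fb_point gf gam (x j)) (fb_point gf gam (x k))).
have H4 := fb_lip (x j) (x k).
have HG := Gsum_nonneg; have HW := Wsum_nonneg; have HK := Kf_nonneg.
rewrite /Kz; rewrite /Gsum in HG.
apply: (Rle_trans _ _ _ H1).
rewrite !Rmult_assoc; apply: Rmult_le_compat_l => //.
apply: (Rle_trans _ _ _ H2); apply: (Rle_trans _ _ _ H3).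
apply: Rmult_le_compat_l => //.
Qed.

Lemma bsq_self (a : bvec n) : bsqnorm (bsub a a) = 0.
Proof.
rewrite /bsqnorm /bdot (fsum_ext _ (fun _ => 0)) ?fsum_zero // => i.
change (@bsub N n a a i) with (subv (a i) (a i)).
by rewrite subv_self dotv_zero_r.
Qed.

Lemma seq_tri (y : nat -> bvec n) m :
  bsqnorm (bsub (y m) (y 0%N)) <= INR m * psum (fun s => bsqnorm (bsub (y (S s)) (y s))) m.
Proof.
elim: m => [|m IH].
  rewrite bsq_self /=; lra.
have Hd := bsq_nonneg (bsub (y (S m)) (y m)).
have HP := psum_nonneg (fun s => bsqnorm (bsub (y (S s)) (y s))) m (fun s => bsq_nonneg _).
rewrite S_INR /=.
case: m IH Hd HP => [|m] IH Hd HP.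
  rewrite /= in IH *; lra.
set e := INR m.+1.
have He : 0 < e by apply: lt_0_INR; lia.
have Ht := bsq_tri e (y m.+2) (y m.+1) (y 0%N) He.
have Hie : 0 < / e by apply: Rinv_0_lt_compat.
have H2 : (1 + / e) * bsqnorm (bsub (y m.+1) (y 0%N)) <= (1 + / e) * (e * psum (fun s => bsqnorm (bsub (y (S s)) (y s))) m.+1).
  apply: Rmult_le_compat_l => //; lra.
have E : (1 + / e) * (e * psum (fun s => bsqnorm (bsub (y (S s)) (y s))) m.+1) = (e + 1) * psum (fun s => bsqnorm (bsub (y (S s)) (y s))) m.+1.
  field; lra.
rewrite E in H2.
have -> : (e + 1) * (psum (fun s => bsqnorm (bsub (y (S s)) (y s))) m.+1 + bsqnorm (bsub (y m.+2) (y m.+1)))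
  = (e + 1) * psum (fun s => bsqnorm (bsub (y (S s)) (y s))) m.+1 + (1 + e) * bsqnorm (bsub (y m.+2) (y m.+1)) by ring.
lra.
Qed.

Definition Sk k := psum (fun s => Dst (k + s)%N) T.

Lemma x_tri k m : (m <= T)%N -> bsqnorm (bsub (x (k + m)%N) (x k)) <= INR T * Sk k.
Proof.
move=> HmT.
have H := seq_tri (fun s => x (k + s)%N) m.
rewrite /= addn0 in H.
rewrite (psum_ext _ (fun s => Dst (k + s)%N)) in H; last by move=> s; rewrite /Dst addnS.
apply: (Rle_trans _ _ _ H).
have H1 : INR m <= INR T by apply: le_INR; apply/leP.
have H2 : psum (fun s => Dst (k + s)%N) m <= Sk k by apply: psum_mono => // s; exact: Dst_nonneg.
have H3 := psum_nonneg (fun s => Dst (k + s)%N) m (fun s => Dst_nonneg _).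
have H4 := pos_INR m.
nra.
Qed.

Lemma Kz_nonneg : 0 <= Kz.
Proof. rewrite /Kz; have := Gsum_nonneg; have := Wsum_nonneg; have := Kf_nonneg; move=> *. 
apply: Rmult_le_pos => //; exact: Rmult_le_pos. Qed.

Lemma Sk_nonneg k : 0 <= Sk k.
Proof. apply: psum_nonneg => s; exact: Dst_nonneg. Qed.

Lemma rr_bound k : rr k <= INR N * ((2 + 2 * Kz) * (INR T * Sk k)).
Proof.
apply: fsum_bound => i; first exact: dotv_nonneg.
have [t [Ht HI]] := Hcyc k i.
case/andP: Ht => Ht1 HtT.
case: t Ht1 HtT HI => [|t] // _ HtT HI.
have Hx : x (k + t.+1)%N i = z (k + t)%N i.
  by rewrite addnS Hupd -addnS HI.
change (@bsub N n (x k) (z k) i) with (subv (x k i) (z k i)).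
have T1 := dotv_tri2 (x k i) (x (k + t.+1)%N i) (z k i).
rewrite Hx in T1.
have A1 : dotv (subv (x k i) (z (k + t)%N i)) (subv (x k i) (z (k + t)%N i)) <= INR T * Sk k.
  have := block_le_bsq (bsub (x k) (x (k + t.+1)%N)) i.
  change (@bsub N n (x k) (x (k + t.+1)%N) i) with (subv (x k i) (x (k + t.+1)%N i)).
  rewrite Hx bsq_sym => Hb.
  apply: (Rle_trans _ _ _ Hb); exact: x_tri.
have A2 : dotv (subv (z (k + t)%N i) (z k i)) (subv (z (k + t)%N i) (z k i)) <= Kz * (INR T * Sk k).
  have := block_le_bsq (bsub (z (k + t)%N) (z k)) i.
  change (@bsub N n (z (k + t)%N) (z k) i) with (subv (z (k + t)%N i) (z k i)).
  move=> Hb; apply: (Rle_trans _ _ _ Hb); apply: (Rle_trans _ _ _ (z_lip _ _)).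
  apply: Rmult_le_compat_l; first exact: Kz_nonneg.
  apply: x_tri; exact: ltnW.
lra.
Qed.

Definition Arr := INR N * ((2 + 2 * Kz) * INR T).

Lemma Arr_nonneg : 0 <= Arr.
Proof.
rewrite /Arr; have := pos_INR N; have := pos_INR T; have := Kz_nonneg => *.
apply: Rmult_le_pos => //; apply: Rmult_le_pos => //; lra.
Qed.

Lemma Bd_nonneg : 0 <= Bd.
Proof.
rewrite /Bd; apply: Rmult_le_pos; first by left; apply: Rinv_0_lt_compat; exact: cmin_pos.
have := amin_le 0; lra.
Qed.

Lemma rr_psum K : psum rr K <= Arr * (INR T * Bd).
Proof.
apply: (Rle_trans _ (psum (fun k => Arr * Sk k) K)).
  apply: psum_le => k; have := rr_bound k; rewrite /Arr; move=> H; nra.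
rewrite psum_scal; apply: Rmult_le_compat_l; first exact: Arr_nonneg.
rewrite /Sk (psum_swap (fun k s => Dst (k + s)%N)).
rewrite -psum_const; apply: psum_le => s; exact: Dst_tele.
Qed.

Lemma rr_summable : exists l, Un_cv (fun K => sum_f_R0 rr K) l.
Proof.
apply: Un_cv_crit.
- move=> m /=; have := rr_nonneg m.+1; lra.
- exists (Arr * (INR T * Bd)) => y [i ->].
  rewrite sum_f_psum; exact: rr_psum.
Qed.

Lemma rr_to0 l : Un_cv (fun K => sum_f_R0 rr K) l -> Un_cv rr 0.
Proof.
move=> H eps He.
have [N0 HN0] := H (eps / 2) ltac:(lra).
exists (S N0) => k Hk.
case: k Hk => [|m] Hk; first lia.
have H1 := HN0 m ltac:(lia).
have H2 := HN0 m.+1 ltac:(lia).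
rewrite /R_dist /= in H1 H2 *.
move: H2; rewrite /=; move=> H2.
rewrite Rminus_0_r.
move/Rabs_def2: H1 => [? ?]; move/Rabs_def2: H2 => [? ?].
apply: Rabs_def1; lra.
Qed.

Lemma phi_cv : {l | Un_cv phi l}.
Proof.
apply: decreasing_cv.
- move=> m; exact: phi_decr.
- exists (- amin) => y [i ->]; rewrite /opp_seq; have := amin_le i; lra.
Qed.

Lemma Cmax_nonneg : 0 <= Cmax.
Proof. apply: fsum_nonneg => i; exact: Ci_pos. Qed.

Lemma Phz_cv l : Un_cv rr 0 -> Un_cv phi l -> Un_cv Phz l.
Proof.
move=> Hr Hp eps He.
have HC := Cmax_nonneg.
have [N1 H1] := Hp (eps / 2) ltac:(lra).
have He2 : 0 < eps / (2 * (Cmax + 1)) by apply: Rdiv_lt_0_compat; lra.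
have [N2 H2] := Hr _ He2.
exists (N1 + N2)%coq_nat => k Hk.
have A1 := H1 k ltac:(lia).
have A2 := H2 k ltac:(lia).
rewrite /R_dist Rminus_0_r in A2 *.
rewrite /R_dist in A1.
have B1 := Phz_le_phi k.
have B2 := phi_le_Phz k.
have Hr0 := rr_nonneg k.
rewrite Rabs_right in A2; last lra.
have B3 : Cmax * rr k <= Cmax * (eps / (2 * (Cmax + 1))) by apply: Rmult_le_compat_l; lra.
have B4 : Cmax * (eps / (2 * (Cmax + 1))) < eps / 2.
  have -> : Cmax * (eps / (2 * (Cmax + 1))) = eps / 2 * (Cmax / (Cmax + 1)) by field; lra.
  have : Cmax / (Cmax + 1) < 1.
    apply: (Rmult_lt_reg_r (Cmax + 1)); first lra.
    have -> : Cmax / (Cmax + 1) * (Cmax + 1) = Cmax by field; lra.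
    lra.
  move=> ?; nra.
move/Rabs_def2: A1 => [? ?].
apply: Rabs_def1; lra.
Qed.

Hypothesis HGlsc : lsc G.
Hypothesis HGproper : proper_fun G.

Lemma cluster_main c l : Un_cv rr 0 -> Un_cv phi l -> cluster_point x c ->
  exists ac, G c = EFin ac /\ in_prox G gam (fb_point gf gam c) c /\ Fsum f c + ac = l.
Proof.
move=> Hr Hl Hcl.
have near := near_both x z c Hr Hcl.
set uc := fb_point gf gam c.
have StepA : forall w b, G w = EFin b -> forall r, rlt_e r (G c) ->
    r + / 2 * bwsqnorm gam (bsub c uc) <= / 2 * bwsqnorm gam (bsub w uc) + b.
  move=> w b Hw r Hrc.
  apply: Rle_plus_epsilon => eps He.
  have [d1 [Hd1 H1]] := HGlsc c r Hrc.
  have [d2 [Hd2 H2]] := Qcont c w eps He.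
  have Hd : 0 < Rmin (d1 * d1) d2 by apply: Rmin_glb_lt => //; nra.
  have [k [_ [Hxk Hzk]]] := near _ Hd 0%N.
  have Hxk2 : bsqnorm (bsub (x k) c) < d2 by have := Rmin_r (d1 * d1) d2; lra.
  have Hzk2 : bsqnorm (bsub (z k) c) < d2 by have := Rmin_r (d1 * d1) d2; lra.
  have Hzk1 : bnorm (bsub (z k) c) < d1.
    apply/(bnorm_bsq _ _ Hd1); have := Rmin_l (d1 * d1) d2; lra.
  have := H1 _ Hzk1; rewrite Hav /= => Hrk.
  have Hp := prox_ineq (HT k) (Hav k) Hw.
  have := H2 _ _ Hxk2 Hzk2 => /Rabs_def2 [Ha Hb].
  rewrite -/uc in Ha Hb; lra.
have [ac Hac] : exists ac, G c = EFin ac.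
  case E : (G c) => [ac|]; first by exists ac.
  exfalso.
  have [x0 [r0 Hx0]] := HGproper.
  have := StepA x0 r0 Hx0 (/ 2 * bwsqnorm gam (bsub x0 uc) + r0 - / 2 * bwsqnorm gam (bsub c uc) + 1).
  rewrite E /= => H; have := H Logic.I; lra.
have Hprox : in_prox G gam uc c.
  exists ac; split => // w.
  case Ew : (G w) => [b|] //=.
  apply: Rle_plus_epsilon => eps He.
  have := StepA w b Ew (ac - eps); rewrite Hac /= => H.
  have := H ltac:(lra); lra.
exists ac; split => //; split => //.
apply: eq_of_close => eps He.
have He4 : 0 < eps / 4 by lra.
have [N1 HN1] := Phz_cv l Hr Hl (eps / 4) He4.
have [dF [HdF HF]] := Fsum_cont c _ He4.
have [dL [HdL HL']] := HGlsc c (ac - eps / 4) ltac:(rewrite Hac /=; lra).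
have [dQ [HdQ HQ]] := Qcont c c _ He4.
set d := Rmin (Rmin dF (dL * dL)) dQ.
have Hd : 0 < d by apply: Rmin_glb_lt; [apply: Rmin_glb_lt => //; nra | done].
have Hm1 := Rmin_l (Rmin dF (dL * dL)) dQ.
have Hm2 := Rmin_r (Rmin dF (dL * dL)) dQ.
have Hm3 := Rmin_l dF (dL * dL).
have Hm4 := Rmin_r dF (dL * dL).
have [k [Hk [Hxk Hzk]]] := near _ Hd N1.
rewrite -/d in Hxk Hzk. have Ed : d = Rmin (Rmin dF (dL * dL)) dQ by [].
have A1 := HN1 k ltac:(apply/leP; exact: Hk).
rewrite /R_dist /Phz in A1.
have A2 := HF (z k) ltac:(lra).
have Hzk1 : bnorm (bsub (z k) c) < dL by apply/(bnorm_bsq _ _ HdL); lra.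
have := HL' _ Hzk1; rewrite Hav /= => A3.
have Hp := prox_ineq (HT k) (Hav k) Hac.
have Hx3 : bsqnorm (bsub (x k) c) < dQ by lra.
have Hz3 : bsqnorm (bsub (z k) c) < dQ by lra.
have := HQ _ _ Hx3 Hz3.
move=> /Rabs_def2 [Ha Hb]; rewrite -/uc in Ha Hb.
move/Rabs_def2: A1 => [? ?]; move/Rabs_def2: A2 => [? ?].
apply: Rabs_def1; lra.
Qed.

Lemma bdot_zero (v : bvec n) : bdot (@bzero N n) v = 0.
Proof.
rewrite /bdot (fsum_ext _ (fun _ => 0)) ?fsum_zero // => i.
rewrite /dotv (fsum_ext _ (fun _ => 0)) ?fsum_zero // => j.
rewrite /bzero; ring.
Qed.

Lemma frechet_at c ac : in_prox G gam (fb_point gf gam c) c -> G c = EFin ac ->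
  in_frechet_subdiff (PhiF f G) c (@bzero N n).
Proof.
move=> Hp Hac; exists (Fsum f c + ac); split; first by rewrite /PhiF Hac.
move=> eps He.
have HC := Cmax_nonneg.
exists (eps / (Cmax + 1)); split; first by apply: Rdiv_lt_0_compat; lra.
move=> y Hy.
case Ey : (G y) => [g|]; rewrite /PhiF Ey //=.
have H1 := FBE_lower Hp Hac Ey.
rewrite Fsum_blk in H1.
have H2 := blk_sum_le c y.
rewrite bdot_zero.
have Hb := bnorm_nonneg (bsub y c).
rewrite -bnorm_sq in H2.
have H3 : Cmax * (bnorm (bsub y c) * bnorm (bsub y c)) <= eps * bnorm (bsub y c).
  have H4 : Cmax * bnorm (bsub y c) <= eps.
    apply: (Rle_trans _ (Cmax * (eps / (Cmax + 1)))); first by apply: Rmult_le_compat_l; lra.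
    have -> : Cmax * (eps / (Cmax + 1)) = eps * (Cmax / (Cmax + 1)) by field; lra.
    have : Cmax / (Cmax + 1) <= 1.
      apply: (Rmult_le_reg_r (Cmax + 1)); first lra.
      have -> : Cmax / (Cmax + 1) * (Cmax + 1) = Cmax by field; lra.
      lra.
    move=> ?; nra.
  nra.
lra.
Qed.

Lemma final_sec :
  (exists l, infinite_sum (fun k => bsqnorm (bsub (x k) (z k))) l) /\
  (exists (phi : nat -> R) (phiz : nat -> R) (Phistar : R),
     (forall k, is_FBE f gf G gam (x k) (phi k)) /\
     Un_cv phi Phistar /\
     (forall w a, is_minimizer (PhiF f G) w -> PhiF f G w = EFin a -> a <= Phistar) /\
     (forall k, PhiF f G (z k) = EFin (phiz k)) /\
     Un_cv phiz Phistar /\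
     (forall c, cluster_point x c <-> cluster_point z c) /\
     (forall c, cluster_point x c ->
        in_frechet_subdiff (PhiF f G) c (@bzero N n) /\
        PhiF f G c = EFin Phistar /\
        is_FBE f gf G gam c Phistar)).
Proof.
have [l0 Hl0] := rr_summable.
have Hr := rr_to0 l0 Hl0.
case: phi_cv => Phistar HPs.
split; first by exists l0; exact: Hl0.
exists phi, Phz, Phistar.
split; first exact: phi_FBE.
split; first exact: HPs.
split.
  move=> w a [a' [Hw' Hall]] Hwa.
  rewrite Hwa in Hw'; case: Hw' => ->.
  apply: (le_lim_const Phz) (Phz_cv Phistar Hr HPs) => k.
  by have := Hall (z k); rewrite PhiF_z.
split; first exact: PhiF_z.
split; first exact: Phz_cv.
split.
  move=> c; split; first exact: cluster_transfer.
  apply: cluster_transfer.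
  have -> : (fun k => bsqnorm (bsub (z k) (x k))) = rr.
    by apply: functional_extensionality => k; rewrite bsq_sym.
  exact: Hr.
move=> c Hcl.
have [ac [Hac [Hprox Heq]]] := cluster_main c Phistar Hr HPs Hcl.
split; first exact: (frechet_at c ac Hprox Hac).
split; first by rewrite /PhiF Hac /= Heq.
have := is_FBE_at c c ac Hprox Hac; by rewrite Fsum_blk Heq.
Qed.
End Main.


Theorem theorem2p8
  (N : nat) (n : 'I_N -> nat)
  (f : forall i : 'I_N, vec (n i) -> R)
  (gf : forall i : 'I_N, vec (n i) -> vec (n i))
  (L : 'I_N -> R)
  (G : bvec n -> ereal)
  (gam : 'I_N -> R)
  (HN : (1 <= N)%nat)
  (Hgrad : forall i, has_gradient (f i) (gf i))
  (HL : forall i, 0 <= L i /\ lipschitz (gf i) (L i))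
  (HGproper : proper_fun G) (HGlsc : lsc G) (HGconvex : convex_fun G)
  (Hargmin : exists w, is_minimizer (PhiF f G) w)
  (Hgam : forall i, 0 < gam i /\ gam i * L i < INR N)
  (x z : nat -> bvec n) (I : nat -> 'I_N -> bool)
  (HT : forall k, in_T gf G gam (x k) (z k))
  (Hupd : forall k i, x (S k) i = if I (S k) i then z k i else x k i)
  (Hcyc : exists T : nat, (1 <= T)%nat /\
     forall (k : nat) (i : 'I_N), exists t : nat, (1 <= t <= T)%nat /\ I (k + t)%nat i = true) :
  (* (i) *)
  (exists l, infinite_sum (fun k => bsqnorm (bsub (x k) (z k))) l) /\
  (* (ii) *)
  (exists (phi : nat -> R) (phiz : nat -> R) (Phistar : R),
     (forall k, is_FBE f gf G gam (x k) (phi k)) /\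
     Un_cv phi Phistar /\
     (forall w a, is_minimizer (PhiF f G) w -> PhiF f G w = EFin a -> a <= Phistar) /\
     (forall k, PhiF f G (z k) = EFin (phiz k)) /\
     Un_cv phiz Phistar /\
  (* (iii) *)
     (forall c, cluster_point x c <-> cluster_point z c) /\
     (forall c, cluster_point x c ->
        in_frechet_subdiff (PhiF f G) c (@bzero N n) /\
        PhiF f G c = EFin Phistar /\
        is_FBE f gf G gam c Phistar)).
Proof.
have [w [amin [Hw Hall]]] := Hargmin.
have [T [HT1 Hc]] := Hcyc.
exact: (final_sec N n f gf L G gam HN Hgrad HL Hgam HGconvex amin Hall x z I HT Hupd T Hc HGlsc HGproper).
Qed.
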